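(* For any first-order $\mathscr L$-theory $T$, the following are equivalent: (1) $T$ is model-complete; (2) $T^*$ is positively model-complete; (3) $T^*$ is geometrically complete.
   Context: $\mathscr L^*$ is $\mathscr L$ plus, for each relation symbol $R$ of $\mathscr L$, a new relation symbol $R^*$ of the same arity; $T^*$ (the atomic Morleyisation of $T$) is $T$ together with all axioms $\forall\bar x(\neg R(\bar x)\leftrightarrow R^*(\bar x))$. $T$ is model-complete if every embedding between models of $T$ is existentially closed (reflects existential sentences with parameters). A homomorphism preserves atomic sentences with parameters; it is an immersion if it reflects every positive existential (prenex existential, negation-free) sentence with parameters; a theory is positively model-complete if every homomorphism between its models is an immersion. A homomorphism $f:A\to B$ is geometrically closed if every sentence $\forall\bar y\,(\bigwedge\Phi(\bar a,\bar y)\to\psi(\bar a,\bar y))$ ($\Phi\cup\{\psi\}$ finite sets of atomic formulas, parameters from $A$) true in $A$ holds in $B$ of $f\bar a$; a theory is geometrically complete if every homomorphism between its models is geometrically closed. *)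

(* Defs.v *)
From Stdlib Require Import List.
From Stdlib Require Fin.
Import ListNotations.

Set Implicit Arguments.

Record Lang : Type := {
  Func : Type;
  farity : Func -> nat;
  Rel : Type;
  rarity : Rel -> nat
}.

Inductive term (L : Lang) : Type :=
| tvar : nat -> term L
| tapp : forall f : Func L, (Fin.t (farity L f) -> term L) -> term L.

Inductive formula (L : Lang) : Type :=
| fTrue : formula L
| fFalse : formula L
| fEq : term L -> term L -> formula L
| fRel : forall R : Rel L, (Fin.t (rarity L R) -> term L) -> formula L
| fNeg : formula L -> formula L
| fAnd : formula L -> formula L -> formula L
| fOr : formula L -> formula L -> formula L
| fImp : formula L -> formula L -> formula L
| fEx : formula L -> formula L
| fAll : formula L -> formula L.

Arguments tvar {L} _.
Arguments fTrue {L}.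
Arguments fFalse {L}.

Definition fIff {L} (p q : formula L) : formula L := fAnd (fImp p q) (fImp q p).

(** A theory: a set of formulas (each read as its universal closure). *)
Definition theory (L : Lang) := formula L -> Prop.

Record Structure (L : Lang) : Type := {
  dom :> Type;
  interp_f : forall f : Func L, (Fin.t (farity L f) -> dom) -> dom;
  interp_r : forall R : Rel L, (Fin.t (rarity L R) -> dom) -> Prop
}.

Definition scons {A : Type} (a : A) (e : nat -> A) (n : nat) : A :=
  match n with 0 => a | S m => e m end.

Fixpoint eval {L} (M : Structure L) (e : nat -> M) (t : term L) : M :=
  match t with
  | tvar n => e n
  | tapp f args => interp_f M f (fun i => eval M e (args i))
  end.

Fixpoint sat {L} (M : Structure L) (e : nat -> M) (p : formula L) : Prop :=
  match p with
  | fTrue => True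
  | fFalse => False
  | fEq t1 t2 => eval M e t1 = eval M e t2
  | fRel R args => interp_r M R (fun i => eval M e (args i))
  | fNeg q => ~ sat M e q
  | fAnd q r => sat M e q /\ sat M e r
  | fOr q r => sat M e q \/ sat M e r
  | fImp q r => sat M e q -> sat M e r
  | fEx q => exists a : M, sat M (scons a e) q
  | fAll q => forall a : M, sat M (scons a e) q
  end.

(** Models (first-order structures are nonempty). *)
Definition is_model {L} (T : theory L) (M : Structure L) : Prop :=
  inhabited (dom M) /\ forall p, T p -> forall e : nat -> M, sat M e p.

Fixpoint exs {L} (k : nat) (p : formula L) : formula L :=
  match k with 0 => p | S k' => fEx (exs k' p) end.
Fixpoint alls {L} (k : nat) (p : formula L) : formula L :=
  match k with 0 => p | S k' => fAll (alls k' p) end.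

Definition bigand {L} (l : list (formula L)) : formula L :=
  fold_right (@fAnd L) fTrue l.

Inductive atomic {L} : formula L -> Prop :=
| at_eq : forall t1 t2, atomic (fEq t1 t2)
| at_rel : forall R args, atomic (fRel R args).

Inductive qfree {L} : formula L -> Prop :=
| qf_true : qfree fTrue
| qf_false : qfree fFalse
| qf_eq : forall t1 t2, qfree (fEq t1 t2)
| qf_rel : forall R args, qfree (fRel R args)
| qf_neg : forall p, qfree p -> qfree (fNeg p)
| qf_and : forall p q, qfree p -> qfree q -> qfree (fAnd p q)
| qf_or : forall p q, qfree p -> qfree q -> qfree (fOr p q)
| qf_imp : forall p q, qfree p -> qfree q -> qfree (fImp p q).

Inductive posqf {L} : formula L -> Prop :=
| pq_true : posqf fTrue
| pq_false : posqf fFalse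
| pq_eq : forall t1 t2, posqf (fEq t1 t2)
| pq_rel : forall R args, posqf (fRel R args)
| pq_and : forall p q, posqf p -> posqf q -> posqf (fAnd p q)
| pq_or : forall p q, posqf p -> posqf q -> posqf (fOr p q).

(** Maps between structures. Parameters from A are given by an assignment
    e : nat -> A of the free variables; their images are h \o e. *)
Definition is_hom {L} (A B : Structure L) (h : A -> B) : Prop :=
  (forall f (a : Fin.t (farity L f) -> A),
      h (interp_f A f a) = interp_f B f (fun i => h (a i))) /\
  (forall R (a : Fin.t (rarity L R) -> A),
      interp_r A R a -> interp_r B R (fun i => h (a i))).

Definition is_embedding {L} (A B : Structure L) (h : A -> B) : Prop :=
  is_hom A B h /\
  (forall x y, h x = h y -> x = y) /\
  (forall R (a : Fin.t (rarity L R) -> A),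
      interp_r B R (fun i => h (a i)) -> interp_r A R a).

Definition ex_closed {L} (A B : Structure L) (h : A -> B) : Prop :=
  forall (k : nat) (p : formula L), qfree p ->
  forall e : nat -> A, sat B (fun n => h (e n)) (exs k p) -> sat A e (exs k p).

Definition is_immersion {L} (A B : Structure L) (h : A -> B) : Prop :=
  is_hom A B h /\
  forall (k : nat) (p : formula L), posqf p ->
  forall e : nat -> A, sat B (fun n => h (e n)) (exs k p) -> sat A e (exs k p).

Definition geom_closed {L} (A B : Structure L) (h : A -> B) : Prop :=
  is_hom A B h /\
  forall (k : nat) (Phi : list (formula L)) (psi : formula L),
  Forall atomic Phi -> atomic psi ->
  forall e : nat -> A,
    sat A e (alls k (fImp (bigand Phi) psi)) ->
    sat B (fun n => h (e n)) (alls k (fImp (bigand Phi) psi)).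

Definition model_complete {L} (T : theory L) : Prop :=
  forall (A B : Structure L), is_model T A -> is_model T B ->
  forall h : A -> B, is_embedding A B h -> ex_closed A B h.

Definition pos_model_complete {L} (T : theory L) : Prop :=
  forall (A B : Structure L), is_model T A -> is_model T B ->
  forall h : A -> B, is_hom A B h -> is_immersion A B h.

Definition geom_complete {L} (T : theory L) : Prop :=
  forall (A B : Structure L), is_model T A -> is_model T B ->
  forall h : A -> B, is_hom A B h -> geom_closed A B h.

(** Equality is treated as one of the relation
    symbols of L, so L* contains, besides R* for every relation symbol R,
    the symbol =* (written Neq) for the negation of equality. *)
Inductive MRel (L : Lang) : Type :=
| Orig : Rel L -> MRel L
| Star : Rel L -> MRel L
| Neq : MRel L.

Definition Lstar (L : Lang) : Lang := {|
  Func := Func L;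
  farity := farity L;
  Rel := MRel L;
  rarity := fun r => match r with
                     | Orig _ R => rarity L R
                     | Star _ R => rarity L R
                     | Neq _ => 2
                     end
|}.

Fixpoint tr_term {L} (t : term L) : term (Lstar L) :=
  match t with
  | tvar n => tvar n
  | tapp f args => @tapp (Lstar L) f (fun i => tr_term (args i))
  end.

Fixpoint tr_formula {L} (p : formula L) : formula (Lstar L) :=
  match p with
  | fTrue => fTrue
  | fFalse => fFalse
  | fEq t1 t2 => fEq (tr_term t1) (tr_term t2)
  | fRel R args => @fRel (Lstar L) (Orig L R) (fun i => tr_term (args i))
  | fNeg q => fNeg (tr_formula q)
  | fAnd q r => fAnd (tr_formula q) (tr_formula r)
  | fOr q r => fOr (tr_formula q) (tr_formula r)
  | fImp q r => fImp (tr_formula q) (tr_formula r)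
  | fEx q => fEx (tr_formula q)
  | fAll q => fAll (tr_formula q)
  end.

Definition fin_vars {L} (n : nat) : Fin.t n -> term L :=
  fun i => tvar (proj1_sig (Fin.to_nat i)).
Arguments fin_vars {L} n _.

Definition morley_ax {L} (R : Rel L) : formula (Lstar L) :=
  alls (rarity L R)
    (fIff (fNeg (@fRel (Lstar L) (Orig L R) (fin_vars (rarity L R))))
          (@fRel (Lstar L) (Star L R) (fin_vars (rarity L R)))).

Definition neq_ax (L : Lang) : formula (Lstar L) :=
  alls 2 (fIff (fNeg (fEq (tvar 0) (tvar 1)))
               (@fRel (Lstar L) (Neq L) (fin_vars 2))).

Definition Tstar {L} (T : theory L) : theory (Lstar L) :=
  fun p => (exists q, T q /\ p = tr_formula q)
        \/ (exists R : Rel L, p = morley_ax R)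
        \/ p = neq_ax L.

(* Main.v *)
Require Import Defs.
From Stdlib Require Import List Classical FunctionalExtensionality Lia Setoid Morphisms PeanoNat Arith.
Import ListNotations.

Lemma exs_mono (L0 : Lang) (M : Structure L0) (p q : formula L0) :
  (forall e, sat M e p -> sat M e q) -> forall k e, sat M e (exs k p) -> sat M e (exs k q).
Proof. intros H k; induction k; simpl; intros e Hs; [auto| destruct Hs as [a Ha]; exists a; auto]. Qed.

Lemma exs_dist (L0 : Lang) (M : Structure L0) (A : Type) (D : list A) (f : A -> formula L0) p :
  (forall e, sat M e p -> exists c, In c D /\ sat M e (f c)) ->
  forall k e, sat M e (exs k p) -> exists c, In c D /\ sat M e (exs k (f c)).
Proof.
  intros H k; induction k; simpl; intros e Hs. auto.
  destruct Hs as [a Ha]. destruct (IHk _ Ha) as [c [Hc Hc']].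
  exists c; split; auto; exists a; auto.
Qed.

Lemma exs_true (L0 : Lang) (M : Structure L0) (x : M) : forall k e, sat M e (exs k (@fTrue L0)).
Proof. induction k; simpl; intros; auto. exists x; auto. Qed.

Lemma alls_of_not_exs (L0 : Lang) (M : Structure L0) p q :
  (forall e, ~ sat M e p -> sat M e q) -> forall k e, ~ sat M e (exs k p) -> sat M e (alls k q).
Proof.
  intros H; induction k; simpl; intros e Hn. auto. intros a. apply IHk. intro Hc. apply Hn. exists a; auto.
Qed.

Lemma alls_exs_contra (L0 : Lang) (M : Structure L0) p q :
  (forall e, sat M e p -> sat M e q -> False) -> forall k e, sat M e (alls k p) -> sat M e (exs k q) -> False.
Proof. intros H; induction k; simpl; intros e Ha He. eauto. destruct He as [a Hq]. eauto. Qed.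

Lemma not_alls_exs (L0 : Lang) (M : Structure L0) p q :
  (forall e, ~ sat M e p -> sat M e q) -> forall k e, ~ sat M e (alls k p) -> sat M e (exs k q).
Proof.
  intros H; induction k; simpl; intros e Hn. auto.
  apply not_all_ex_not in Hn. destruct Hn as [a Ha]. exists a. auto.
Qed.

Fixpoint extend {X : Type} (n : nat) : (Fin.t n -> X) -> (nat -> X) -> nat -> X :=
  match n with
  | 0 => fun _ d => d
  | S n' => fun a d => scons (a Fin.F1) (extend n' (fun j => a (Fin.FS j)) d)
  end.

Lemma extend_to_nat (X : Type) n (i : Fin.t n) :
  forall (a : Fin.t n -> X) d, extend n a d (proj1_sig (Fin.to_nat i)) = a i.
Proof.
  induction i; intros a d. reflexivity.
  pose proof (IHi (fun j => a (Fin.FS j)) d) as H. simpl in *.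
  destruct (Fin.to_nat i); simpl in *. exact H.
Qed.

Lemma extend_shift (X : Type) n : forall (a : Fin.t n -> X) d m, extend n a d (m + n) = d m.
Proof.
  induction n; intros; simpl. rewrite Nat.add_0_r; auto.
  rewrite Nat.add_succ_r. simpl. apply IHn.
Qed.

Lemma alls_elim (L0 : Lang) (M : Structure L0) p :
  forall k e, sat M e (alls k p) -> forall e', (forall m, e' (m + k) = e m) -> sat M e' p.
Proof.
  induction k; simpl; intros e H e' He'.
  - replace e' with e; [auto|]. apply functional_extensionality; intro m.
    rewrite <- He', Nat.add_0_r; auto.
  - apply (IHk (scons (e' k) e) (H (e' k))). intro m; destruct m; simpl; [auto|].
    rewrite <- He'. f_equal. lia.
Qed.

Lemma bigand_sat (L0 : Lang) (M : Structure L0) e (c : list (formula L0)) :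
  sat M e (bigand c) <-> Forall (sat M e) c.
Proof.
  induction c; simpl. split; auto.
  rewrite IHc. split. intros [H1 H2]; constructor; auto. intros H; inversion H; auto.
Qed.

Definition reduct {L : Lang} (M : Structure (Lstar L)) : Structure L :=
  {| dom := dom M;
     interp_f := fun (f : Func L) (a : Fin.t (farity L f) -> dom M) => interp_f M (f : Func (Lstar L)) a;
     interp_r := fun (R : Rel L) (a : Fin.t (rarity L R) -> dom M) => interp_r M (Orig L R) a |}.

Definition expand {L : Lang} (M : Structure L) : Structure (Lstar L) :=
  {| dom := dom M;
     interp_f := fun (f : Func (Lstar L)) (a : Fin.t (farity (Lstar L) f) -> dom M) => interp_f M (f : Func L) a;
     interp_r := fun (r : MRel L) => match r as r0 return (Fin.t (rarity (Lstar L) r0) -> dom M) -> Prop with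
       | Orig _ R => fun a => interp_r M R a
       | Star _ R => fun a => ~ interp_r M R a
       | Neq _ => fun a => a Fin.F1 <> a (Fin.FS Fin.F1)
       end |}.

Lemma eval_tr_reduct (L : Lang) (M : Structure (Lstar L)) e :
  forall t, eval M e (tr_term t) = eval (reduct M) e t.
Proof.
  fix IH 1. intros [n|f args]; simpl. reflexivity. f_equal.
  apply functional_extensionality; intro i. apply IH.
Qed.

Lemma eval_tr_expand (L : Lang) (M : Structure L) e :
  forall t, eval (expand M) e (tr_term t) = eval M e t.
Proof.
  fix IH 1. intros [n|f args]; simpl. reflexivity. f_equal.
  apply functional_extensionality; intro i. apply IH.
Qed.

Lemma sat_tr_reduct (L : Lang) (M : Structure (Lstar L)) :
  forall p e, sat M e (tr_formula p) <-> sat (reduct M) e p.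
Proof.
  induction p; intros e; simpl; try tauto.
  - rewrite !eval_tr_reduct. tauto.
  - assert (Hf : (fun i => eval M e (tr_term (t i))) = (fun i => eval (reduct M) e (t i)))
      by (apply functional_extensionality; intro; apply eval_tr_reduct).
    rewrite Hf. tauto.
  - rewrite IHp. tauto.
  - rewrite IHp1, IHp2. tauto.
  - rewrite IHp1, IHp2. tauto.
  - rewrite IHp1, IHp2. tauto.
  - split; intros [a Ha]; exists a; apply IHp; exact Ha.
  - split; intros H a; apply IHp; apply H.
Qed.

Lemma sat_tr_expand (L : Lang) (M : Structure L) :
  forall p e, sat (expand M) e (tr_formula p) <-> sat M e p.
Proof.
  induction p; intros e; simpl; try tauto.
  - rewrite !eval_tr_expand. tauto.
  - assert (Hf : (fun i => eval (expand M) e (tr_term (t i))) = (fun i => eval M e (t i)))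
      by (apply functional_extensionality; intro; apply eval_tr_expand).
    rewrite Hf. tauto.
  - rewrite IHp. tauto.
  - rewrite IHp1, IHp2. tauto.
  - rewrite IHp1, IHp2. tauto.
  - rewrite IHp1, IHp2. tauto.
  - split; intros [a Ha]; exists a; apply IHp; exact Ha.
  - split; intros H a; apply IHp; apply H.
Qed.

Lemma star_fact (L : Lang) (T : theory L) (M : Structure (Lstar L)) :
  is_model (Tstar T) M -> forall R a, interp_r M (Star L R) a <-> ~ interp_r M (Orig L R) a.
Proof.
  intros [[x] HM] R a.
  assert (H := HM (morley_ax R) (or_intror (or_introl (ex_intro _ R eq_refl))) (fun _ => x)).
  unfold morley_ax in H.
  pose proof (alls_elim _ _ _ _ _ H (extend _ a (fun _ => x)) (extend_shift _ _ a _)) as H'.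
  simpl in H'.
  assert (Hf : (fun i : Fin.t (rarity L R) => extend (rarity L R) a (fun _ => x) (proj1_sig (Fin.to_nat i))) = a)
    by (apply functional_extensionality; intro i; apply extend_to_nat).
  unfold fin_vars in H'. simpl in H'. rewrite Hf in H'. tauto.
Qed.

Definition pair2 {X : Type} (x y : X) : Fin.t 2 -> X :=
  fun i => match proj1_sig (Fin.to_nat i) with 0 => x | _ => y end.

Lemma neq_fact (L : Lang) (T : theory L) (M : Structure (Lstar L)) :
  is_model (Tstar T) M -> forall (a : Fin.t 2 -> M), interp_r M (Neq L) a <-> a Fin.F1 <> a (Fin.FS Fin.F1).
Proof.
  intros [[x] HM] a.
  assert (H := HM (neq_ax L) (or_intror (or_intror eq_refl)) (fun _ => x)).
  unfold neq_ax in H.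
  pose proof (alls_elim _ _ _ _ _ H (extend 2 a (fun _ => x)) (extend_shift _ _ a _)) as H'.
  simpl in H'.
  assert (Hf : (fun i : Fin.t 2 => scons (a Fin.F1) (scons (a (Fin.FS Fin.F1)) (fun _ : nat => x)) (proj1_sig (Fin.to_nat i))) = a)
    by (apply functional_extensionality; intro i; apply (extend_to_nat _ 2 i a)).
  unfold fin_vars in H'. simpl in H'. rewrite Hf in H'. tauto.
Qed.

Fixpoint untr_term {L : Lang} (t : term (Lstar L)) : term L :=
  match t with
  | tvar n => tvar n
  | tapp f args => @tapp L f (fun i => untr_term (args i))
  end.

Fixpoint untr {L : Lang} (p : formula (Lstar L)) : formula L :=
  match p with
  | fTrue => fTrue
  | fFalse => fFalse
  | fEq t1 t2 => fEq (untr_term t1) (untr_term t2)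
  | fRel r args =>
      (match r as r0 return (Fin.t (rarity (Lstar L) r0) -> term (Lstar L)) -> formula L with
       | Orig _ R => fun a => fRel R (fun i => untr_term (a i))
       | Star _ R => fun a => fNeg (fRel R (fun i => untr_term (a i)))
       | Neq _ => fun a => fNeg (fEq (untr_term (a Fin.F1)) (untr_term (a (Fin.FS Fin.F1))))
       end) args
  | fNeg q => fNeg (untr q)
  | fAnd q r => fAnd (untr q) (untr r)
  | fOr q r => fOr (untr q) (untr r)
  | fImp q r => fImp (untr q) (untr r)
  | fEx q => fEx (untr q)
  | fAll q => fAll (untr q)
  end.

Lemma eval_untr (L : Lang) (M : Structure (Lstar L)) e :
  forall t, eval (reduct M) e (untr_term t) = eval M e t.
Proof.
  fix IH 1. intros [n|f args]; simpl. reflexivity. f_equal.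
  apply functional_extensionality; intro i. apply IH.
Qed.

Lemma untr_exs (L : Lang) (p : formula (Lstar L)) k : untr (exs k p) = exs k (untr p).
Proof. induction k; simpl; congruence. Qed.

Lemma untr_qfree (L : Lang) (p : formula (Lstar L)) : posqf p -> qfree (untr p).
Proof.
  induction 1; simpl; try constructor; auto.
  destruct R; simpl; repeat constructor.
Qed.

Lemma sat_untr (L : Lang) (T : theory L) (M : Structure (Lstar L)) :
  is_model (Tstar T) M -> forall p e, sat M e p <-> sat (reduct M) e (untr p).
Proof.
  intros HM. induction p; intros e; simpl; try tauto.
  - rewrite !eval_untr. tauto.
  - destruct R; simpl.
    + assert (Hf : (fun i : Fin.t (rarity L r) => eval (reduct M) e (untr_term (t i))) = (fun i : Fin.t (rarity L r) => eval M e (t i)))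
        by (apply functional_extensionality; intro; apply eval_untr).
      change (interp_r M (Orig L r) (fun i : Fin.t (rarity L r) => eval M e (t i)) <->
              interp_r M (Orig L r) (fun i : Fin.t (rarity L r) => eval (reduct M) e (untr_term (t i)))).
      rewrite Hf. tauto.
    + assert (Hf : (fun i : Fin.t (rarity L r) => eval (reduct M) e (untr_term (t i))) = (fun i : Fin.t (rarity L r) => eval M e (t i)))
        by (apply functional_extensionality; intro; apply eval_untr).
      change (interp_r M (Star L r) (fun i : Fin.t (rarity L r) => eval M e (t i)) <->
              ~ interp_r M (Orig L r) (fun i : Fin.t (rarity L r) => eval (reduct M) e (untr_term (t i)))).
      rewrite Hf. apply (star_fact _ T _ HM).
    + rewrite (neq_fact _ T _ HM). simpl. rewrite !eval_untr. tauto.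
  - rewrite IHp. tauto.
  - rewrite IHp1, IHp2. tauto.
  - rewrite IHp1, IHp2. tauto.
  - rewrite IHp1, IHp2. tauto.
  - split; intros [a Ha]; exists a; apply IHp; exact Ha.
  - split; intros H a; apply IHp; apply H.
Qed.

Fixpoint nnf {L : Lang} (b : bool) (p : formula L) : formula (Lstar L) :=
  match p with
  | fTrue => if b then fTrue else fFalse
  | fFalse => if b then fFalse else fTrue
  | fEq t1 t2 => if b then fEq (tr_term t1) (tr_term t2)
                 else @fRel (Lstar L) (Neq L) (pair2 (tr_term t1) (tr_term t2))
  | fRel R args => if b then @fRel (Lstar L) (Orig L R) (fun i => tr_term (args i))
                   else @fRel (Lstar L) (Star L R) (fun i => tr_term (args i))
  | fNeg q => nnf (negb b) q
  | fAnd p q => if b then fAnd (nnf true p) (nnf true q) else fOr (nnf false p) (nnf false q)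
  | fOr p q => if b then fOr (nnf true p) (nnf true q) else fAnd (nnf false p) (nnf false q)
  | fImp p q => if b then fOr (nnf false p) (nnf true q) else fAnd (nnf true p) (nnf false q)
  | _ => fTrue
  end.

Lemma nnf_posqf (L : Lang) (p : formula L) : qfree p -> forall b, posqf (nnf b p).
Proof. induction 1; intros []; simpl; try constructor; auto. Qed.

Lemma sat_nnf (L : Lang) (M : Structure L) (p : formula L) : qfree p ->
  forall b e, sat (expand M) e (nnf b p) <-> (if b then sat M e p else ~ sat M e p).
Proof.
  induction 1; intros [] e; simpl; try tauto.
  - rewrite !eval_tr_expand. tauto.
  - unfold pair2; simpl. rewrite !eval_tr_expand. tauto.
  - assert (Hf : (fun i => eval (expand M) e (tr_term (args i))) = (fun i => eval M e (args i)))
      by (apply functional_extensionality; intro; apply eval_tr_expand).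
    rewrite Hf. tauto.
  - assert (Hf : (fun i => eval (expand M) e (tr_term (args i))) = (fun i => eval M e (args i)))
      by (apply functional_extensionality; intro; apply eval_tr_expand).
    rewrite Hf. tauto.
  - rewrite IHqfree. tauto.
  - rewrite IHqfree. destruct (classic (sat M e p)); tauto.
  - rewrite IHqfree1, IHqfree2. tauto.
  - rewrite IHqfree1, IHqfree2. destruct (classic (sat M e p)); destruct (classic (sat M e q)); tauto.
  - rewrite IHqfree1, IHqfree2. tauto.
  - rewrite IHqfree1, IHqfree2. destruct (classic (sat M e p)); destruct (classic (sat M e q)); tauto.
  - rewrite IHqfree1, IHqfree2. destruct (classic (sat M e p)); destruct (classic (sat M e q)); tauto.
  - rewrite IHqfree1, IHqfree2. destruct (classic (sat M e p)); destruct (classic (sat M e q)); tauto.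
Qed.

Definition star {L : Lang} (p : formula (Lstar L)) : formula (Lstar L) :=
  match p with
  | fEq t1 t2 => @fRel (Lstar L) (Neq L) (pair2 t1 t2)
  | fRel r args =>
      (match r as r0 return (Fin.t (rarity (Lstar L) r0) -> term (Lstar L)) -> formula (Lstar L) with
       | Orig _ R => fun a => @fRel (Lstar L) (Star L R) a
       | Star _ R => fun a => @fRel (Lstar L) (Orig L R) a
       | Neq _ => fun a => fEq (a Fin.F1) (a (Fin.FS Fin.F1))
       end) args
  | _ => fTrue
  end.

Lemma star_atomic (L : Lang) (p : formula (Lstar L)) : atomic p -> atomic (star p).
Proof. intros []; simpl; [constructor|]. destruct R; simpl; constructor. Qed.

Lemma sat_star (L : Lang) (T : theory L) (M : Structure (Lstar L)) :
  is_model (Tstar T) M -> forall p e, atomic p -> (sat M e (star p) <-> ~ sat M e p).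
Proof.
  intros HM p e []; simpl.
  - rewrite (neq_fact _ T _ HM). unfold pair2; simpl. tauto.
  - destruct R; simpl.
    + apply (star_fact _ T _ HM).
    + rewrite (star_fact _ T _ HM). destruct (classic (interp_r M (Orig L r) (fun i => eval M e (args i)))); tauto.
    + rewrite (neq_fact _ T _ HM). simpl. destruct (classic (eval M e (args Fin.F1) = eval M e (args (Fin.FS Fin.F1)))); tauto.
Qed.

Fixpoint dnf {L0 : Lang} (p : formula L0) : list (list (formula L0)) :=
  match p with
  | fTrue => [[]]
  | fFalse => []
  | fAnd p q => flat_map (fun c1 => map (fun c2 => c1 ++ c2) (dnf q)) (dnf p)
  | fOr p q => dnf p ++ dnf q
  | _ => [[p]]
  end.

Lemma bigand_app (L0 : Lang) (M : Structure L0) e c1 c2 :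
  sat M e (bigand (c1 ++ c2)) <-> sat M e (bigand c1) /\ sat M e (bigand c2).
Proof. induction c1; simpl. tauto. rewrite IHc1. tauto. Qed.

Lemma dnf_sound (L0 : Lang) (M : Structure L0) (p : formula L0) : posqf p ->
  forall e, sat M e p <-> exists c, In c (dnf p) /\ sat M e (bigand c).
Proof.
  induction 1; intros e; simpl.
  - split. intros _; exists []; simpl; auto. tauto.
  - split. tauto. intros [c [[] _]].
  - split. intros Hx; exists [fEq t1 t2]; simpl; auto. intros [c [[<-|[]] Hc]]; simpl in Hc; tauto.
  - split. intros Hx; exists [fRel R args]; simpl; auto. intros [c [[<-|[]] Hc]]; simpl in Hc; tauto.
  - rewrite IHposqf1, IHposqf2. split.
    + intros [[c1 [H1 H1']] [c2 [H2 H2']]]. exists (c1 ++ c2). split.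
      * apply in_flat_map. exists c1. split; auto. apply in_map. auto.
      * apply bigand_app; auto.
    + intros [c [Hc Hs]]. apply in_flat_map in Hc. destruct Hc as [c1 [H1 Hc]].
      apply in_map_iff in Hc. destruct Hc as [c2 [<- H2]]. apply bigand_app in Hs.
      split; [exists c1|exists c2]; tauto.
  - rewrite IHposqf1, IHposqf2. split.
    + intros [[c [Hc Hs]]|[c [Hc Hs]]]; exists c; rewrite in_app_iff; tauto.
    + intros [c [Hc Hs]]. rewrite in_app_iff in Hc. destruct Hc; [left|right]; exists c; tauto.
Qed.

Lemma dnf_atomic (L0 : Lang) (p : formula L0) : posqf p -> forall c, In c (dnf p) -> Forall atomic c.
Proof.
  induction 1; simpl; intros c Hc.
  - destruct Hc as [<-|[]]; constructor.
  - destruct Hc.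
  - destruct Hc as [<-|[]]; repeat constructor.
  - destruct Hc as [<-|[]]; repeat constructor.
  - apply in_flat_map in Hc. destruct Hc as [c1 [H1 Hc]].
    apply in_map_iff in Hc. destruct Hc as [c2 [<- H2]]. apply Forall_app; auto.
  - rewrite in_app_iff in Hc. destruct Hc; auto.
Qed.

Lemma bigand_posqf (L0 : Lang) (c : list (formula L0)) : Forall atomic c -> posqf (bigand c).
Proof. induction 1; simpl; constructor; auto. destruct H; constructor. Qed.

Lemma alls_intro (L0 : Lang) (M : Structure L0) p :
  (forall e, sat M e p) -> forall k e, sat M e (alls k p).
Proof. intros H; induction k; simpl; auto. Qed.

Lemma model_reduct (L : Lang) (T : theory L) (M : Structure (Lstar L)) :
  is_model (Tstar T) M -> is_model T (reduct M).
Proof.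
  intros [Hi HM]. split. exact Hi. intros q Hq e. apply sat_tr_reduct. apply HM. left. exists q; auto.
Qed.

Lemma model_expand (L : Lang) (T : theory L) (M : Structure L) :
  is_model T M -> is_model (Tstar T) (expand M).
Proof.
  intros [Hi HM]. split. exact Hi. intros p [[q [Hq ->]]|[[R ->]| ->]] e.
  - apply sat_tr_expand. auto.
  - unfold morley_ax. apply alls_intro. intros e'. simpl. tauto.
  - simpl. intros a b. unfold fin_vars; simpl. tauto.
Qed.

Lemma dir1 (L : Lang) (T : theory L) : model_complete T -> pos_model_complete (Tstar T).
Proof.
  intros Hmc A B HA HB h Hh. split; [exact Hh|]. intros k p Hp e HB'.
  destruct Hh as [Hf Hr].
  assert (Hemb : is_embedding (reduct A) (reduct B) h).
  { split; [split|split].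
    - intros f a. apply Hf.
    - intros R a. apply Hr.
    - intros x y Hxy. apply NNPP. intros Hn.
      assert (H1 : interp_r A (Neq L) (pair2 x y)) by (apply (neq_fact _ T _ HA); exact Hn).
      apply Hr in H1. apply (neq_fact _ T _ HB) in H1. apply H1. exact Hxy.
    - intros R a Hb. apply NNPP. intros Hn.
      assert (H1 : interp_r A (Star L R) a) by (apply (star_fact _ T _ HA); exact Hn).
      apply Hr in H1. apply (star_fact _ T _ HB) in H1. apply H1. exact Hb. }
  pose proof (Hmc (reduct A) (reduct B) (model_reduct _ T _ HA) (model_reduct _ T _ HB) h Hemb
               k (untr p) (untr_qfree _ _ Hp) e) as H.
  apply (sat_untr _ T _ HA). rewrite untr_exs. apply H.
  rewrite <- untr_exs. apply (sat_untr _ T _ HB). exact HB'.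
Qed.

Lemma exs_nnf (L : Lang) (M : Structure L) (p : formula L) : qfree p ->
  forall k e, sat (expand M) e (exs k (nnf true p)) <-> sat M e (exs k p).
Proof.
  intros Hq; induction k; intros e; simpl.
  - apply (sat_nnf _ M p Hq true).
  - split; intros [a Ha]; exists a; apply IHk; exact Ha.
Qed.

Lemma dir2 (L : Lang) (T : theory L) : pos_model_complete (Tstar T) -> model_complete T.
Proof.
  intros Hp A B HA HB h [[Hf Hr] [Hinj Hrefl]] k p Hq e HBs.
  assert (Hhom : is_hom (expand A) (expand B) h).
  { split. intros f a; apply Hf.
    intros r a; destruct r; simpl.
    - apply Hr.
    - intros Hn H'; apply Hn; apply Hrefl; exact H'.
    - intros Hn Heq; apply Hn; apply Hinj; exact Heq. }
  destruct (Hp (expand A) (expand B) (model_expand _ T _ HA) (model_expand _ T _ HB) h Hhom) as [_ Him].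
  apply (exs_nnf _ A p Hq). apply Him. apply nnf_posqf; auto.
  apply (exs_nnf _ B p Hq). exact HBs.
Qed.

Lemma dir3 (L : Lang) (T : theory L) : pos_model_complete (Tstar T) -> geom_complete (Tstar T).
Proof.
  intros Hp A B HA HB h Hh. destruct (Hp A B HA HB h Hh) as [_ Him].
  split; [exact Hh|]. intros k Phi psi HPhi Hpsi e HAs.
  apply NNPP. intros HBn.
  assert (HBe : sat B (fun n => h (e n)) (exs k (fAnd (bigand Phi) (star psi)))).
  { apply (not_alls_exs _ B (fImp (bigand Phi) psi)); auto.
    intros e' Hn. simpl in *. rewrite (sat_star _ T _ HB); auto. destruct (classic (sat B e' (bigand Phi))); tauto. }
  apply Him in HBe.
  - refine (alls_exs_contra _ A _ _ _ k e HAs HBe).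
    intros e' H1 H2. simpl in H1, H2. destruct H2 as [H2 H3]. apply (sat_star _ T _ HA) in H3; auto.
  - constructor. apply bigand_posqf; auto. destruct (star_atomic _ _ Hpsi); constructor.
Qed.

Lemma dir4 (L : Lang) (T : theory L) : geom_complete (Tstar T) -> pos_model_complete (Tstar T).
Proof.
  intros Hg A B HA HB h Hh. destruct (Hg A B HA HB h Hh) as [_ Hgc].
  split; [exact Hh|]. intros k p Hp e HBs.
  destruct (exs_dist _ B _ (dnf p) bigand p (fun e' H => proj1 (dnf_sound _ B p Hp e') H) k _ HBs)
    as [c [Hc HBc]].
  apply (exs_mono _ A (bigand c)).
  { intros e' Hs. apply (dnf_sound _ A p Hp). exists c; auto. }
  pose proof (dnf_atomic _ p Hp c Hc) as Hat.
  apply NNPP. intros HAn. destruct c as [|a Phi].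
  - destruct HA as [[x] _]. apply HAn. apply exs_true. exact x.
  - inversion Hat as [|a' Phi' Ha HPhi]; subst.
    assert (HAall : sat A e (alls k (fImp (bigand Phi) (star a)))).
    { apply (alls_of_not_exs _ A (bigand (a :: Phi))); [|exact HAn].
      intros e' Hn. simpl in *. rewrite (sat_star _ T _ HA); auto; tauto. }
    pose proof (Hgc k Phi (star a) HPhi (star_atomic _ _ Ha) e HAall) as HBall.
    refine (alls_exs_contra _ B _ _ _ k _ HBall HBc).
    intros e' H1 H2. simpl in H1, H2. destruct H2 as [H2 H3].
    apply H1 in H3. apply (sat_star _ T _ HB) in H3; auto.
Qed.

Theorem corollary4p22 (L : Lang) (T : theory L) :
  (model_complete T <-> pos_model_complete (Tstar T)) /\
  (pos_model_complete (Tstar T) <-> geom_complete (Tstar T)).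
Proof.
  split; split.
  - apply dir1.
  - apply dir2.
  - apply dir3.
  - apply dir4.
Qed.
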